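(* Let $p$ be an odd prime and $x$ a $p$-adic integer. Let $m\in\{0,1,\ldots,p-1\}$ be the least nonnegative residue of $x$ modulo $p$, and put $t=(x-m)/p$. Suppose $m\leq (p-1)/2$. Then for integers $k$ we have $$ \binom{x}{k}\binom{x+k}{k}\equiv\binom{m}{k}\binom{m+k}{k}\bigl(1+ptH_{m+k}-ptH_{m-k}\bigr)\pmod{p^2}\quad\text{if } 0\leq k\leq m, $$ and $$ \binom{x}{k}\binom{x+k}{k}\equiv \frac{(-1)^mp^2t(t+1)}{k(k-m)\binom{m}{p-k}\binom{k}{m}}\pmod{p^3}\quad\text{if } p-m\leq k\leq p-1. $$ Moreover, if $m<(p-1)/2$ and $m+1\leq k\leq p-1-m$, then $$ \binom{x}{k}\binom{x+k}{k}\equiv\frac{(-1)^{m+k+1}pt\binom{m+k}{k}}{(k-m)\binom{k}{m}}\bigl(1+ptH_{m+k}-ptH_{k-m-1}\bigr)\pmod{p^3}. $$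
   Context: For a $p$-adic integer $y$ and a nonnegative integer $k$, $\binom{y}{k}=y(y-1)\cdots(y-k+1)/k!$. $H_n=\sum_{i=1}^n 1/i$ denotes the $n$th harmonic number ($H_0=0$). Congruences between $p$-adic numbers modulo $p^r$ mean the difference divided by $p^r$ is a $p$-adic integer. *)

(* Defs.v *)
From mathcomp Require Import all_boot all_order all_algebra.
Set Implicit Arguments. Unset Strict Implicit. Unset Printing Implicit Defensive.
Import Order.TTheory GRing.Theory Num.Theory.
Local Open Scope ring_scope.

(* A p-adic integer, represented as a coherent sequence of integer
   approximations: x_(n+1) = x_n (mod p^n).  The p-adic integer is the limit
   x = lim x_n, so that x = x_n (mod p^n) for every n. *)
Record padic_int (p : nat) := PadicInt {
  pa : nat -> int;
  pa_coh : forall n : nat, (pa n.+1 = pa n %[mod (p ^ n)%:Z])%Z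
}.

Definition pint (p : nat) (q : rat) : bool := ~~ ((p%:Z) %| denq q)%Z.

Definition binq (y : rat) (k : nat) : rat :=
  (\prod_(i < k) (y - i%:R)) / (k`!)%:R.

Definition harm (n : nat) : rat := \sum_(i < n) ((i.+1)%:R)^-1.

(* f(x) = g(x) (mod p^r) in Z_p, for functions f, g given by (continuous,
   here rational-coefficient polynomial) expressions in x: the value at x is
   the p-adic limit of the values at the approximations x_n, and p^r Z_p is
   open and closed, so the congruence means that eventually
   (f(x_n) - g(x_n)) / p^r is p-integral. *)
Definition padic_cong (p : nat) (x : padic_int p) (r : nat)
    (f g : rat -> rat) : Prop :=
  exists N : nat, forall n : nat, (N <= n)%N ->
    pint p ((f (pa x n)%:~R - g (pa x n)%:~R) / (p ^ r)%:R).

(* Main.v *)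
Require Import Defs.
From mathcomp Require Import all_boot all_order all_algebra.
From mathcomp Require Import ring lra zify.
Import Order.TTheory GRing.Theory Num.Theory.
Set Implicit Arguments. Unset Strict Implicit.
Local Open Scope ring_scope.
Ltac nlia := repeat (match goal with H : context[rat] |- _ => clear H end); lia.

Lemma pintP (p : nat) (q : rat) : prime p ->
  reflect (exists a b : int, ~~ ((p%:Z) %| b)%Z /\ q = a%:~R / b%:~R) (pint p q).
Proof.
move=> hp; apply: (iffP idP).
  move=> h; exists (numq q), (denq q); split => //; by rewrite divq_num_den.
case=> a [b [hb ->]].
have b0 : b != 0 by apply: contraNneq hb => ->; rewrite dvdz0.
rewrite /pint; apply: contra hb => hd.
set r : rat := a%:~R / b%:~R.
have : (denq r %| b)%Z.
  have e : numq r * b = a * denq r.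
    apply/eqP; rewrite -(eqr_int rat) !rmorphM /= numqE.
    rewrite /r; apply/eqP; field.
    by rewrite ?intr_eq0 ?denq_neq0 ?b0.
  have : (denq r %| numq r * b)%Z by rewrite e dvdz_mull.
  rewrite Gauss_dvdzr //.
  by rewrite coprimezE coprime_sym coprime_num_den.
exact: dvdz_trans.
Qed.

Lemma npdvd_mul (p : nat) (a b : int) : prime p ->
  ~~ ((p%:Z) %| a)%Z -> ~~ ((p%:Z) %| b)%Z -> ~~ ((p%:Z) %| a * b)%Z.
Proof.
move=> hp ha hb; move: ha hb; rewrite !dvdzE abszM /= Euclid_dvdM //.
by move=> ha hb; rewrite negb_or ha hb.
Qed.

Lemma pint_frac (p : nat) (a b : int) : prime p -> ~~ ((p%:Z) %| b)%Z ->
  pint p (a%:~R / b%:~R).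
Proof. by move=> hp hb; apply/pintP => //; exists a, b. Qed.

Lemma pint_int (p : nat) (a : int) : prime p -> pint p a%:~R.
Proof.
move=> hp; have := @pint_frac p a 1 hp; rewrite divr1; apply.
by rewrite dvdzE /= dvdn1; case: eqP hp => // ->.
Qed.

Lemma pint_nat (p n : nat) : prime p -> pint p n%:R.
Proof. by move=> hp; have := @pint_int p n hp. Qed.

Lemma pint0 p : prime p -> pint p 0. Proof. by move=> hp; apply: (@pint_nat p 0). Qed.
Lemma pint1 p : prime p -> pint p 1. Proof. by move=> hp; apply: (@pint_nat p 1). Qed.

Lemma pintD p a b : prime p -> pint p a -> pint p b -> pint p (a + b).
Proof.
move=> hp /(pintP _ hp) [a1 [a2 [h2 ->]]] /(pintP _ hp) [b1 [b2 [h2' ->]]].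
have n1 : a2 != 0 by apply: contraNneq h2 => ->; rewrite dvdz0.
have n2 : b2 != 0 by apply: contraNneq h2' => ->; rewrite dvdz0.
have -> : a1%:~R / a2%:~R + b1%:~R / b2%:~R =
  (a1 * b2 + b1 * a2)%:~R / (a2 * b2)%:~R :> rat.
  rewrite !rmorphD !rmorphM /=; field.
  by rewrite !intr_eq0 n1 n2.
exact: pint_frac (npdvd_mul hp h2 h2').
Qed.

Lemma pintM p a b : prime p -> pint p a -> pint p b -> pint p (a * b).
Proof.
move=> hp /(pintP _ hp) [a1 [a2 [h2 ->]]] /(pintP _ hp) [b1 [b2 [h2' ->]]].
have -> : a1%:~R / a2%:~R * (b1%:~R / b2%:~R) =
  (a1 * b1)%:~R / (a2 * b2)%:~R :> rat.
  by rewrite !rmorphM /= invfM; ring.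
exact: pint_frac (npdvd_mul hp h2 h2').
Qed.

Lemma pintN p a : prime p -> pint p a -> pint p (- a).
Proof.
move=> hp ha; rewrite -mulN1r; apply: pintM => //.
exact: (@pint_int p (-1)).
Qed.

Lemma pintB p a b : prime p -> pint p a -> pint p b -> pint p (a - b).
Proof. by move=> hp ha hb; apply: pintD => //; apply: pintN. Qed.

Lemma pintX p a n : prime p -> pint p a -> pint p (a ^+ n).
Proof.
move=> hp ha; elim: n => [|n IH]; first by rewrite expr0 pint1.
by rewrite exprS pintM.
Qed.

Lemma pintVz p (b : int) : prime p -> ~~ ((p%:Z) %| b)%Z -> pint p (b%:~R^-1).
Proof. by move=> hp hb; have := @pint_frac p 1 b hp hb; rewrite div1r. Qed.

Lemma pintVn p (b : nat) : prime p -> (0 < b)%N -> (b < p)%N -> pint p (b%:R^-1).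
Proof.
move=> hp h0 h1; have := @pintVz p b hp; apply.
by rewrite dvdzE /= gtnNdvd.
Qed.

Lemma pint_sum p n (F : nat -> rat) : prime p ->
  (forall i, (i < n)%N -> pint p (F i)) -> pint p (\sum_(i < n) F i).
Proof.
move=> hp hF; elim/big_ind: _ => //; first exact: pint0.
  by move=> x y; apply: pintD.
by move=> i _; apply: hF.
Qed.

Lemma pint_prod p n (F : nat -> rat) : prime p ->
  (forall i, (i < n)%N -> pint p (F i)) -> pint p (\prod_(i < n) F i).
Proof.
move=> hp hF; elim/big_ind: _ => //; first exact: pint1.
  by move=> x y; apply: pintM.
by move=> i _; apply: hF.
Qed.

Lemma pintVfact p k : prime p -> (k < p)%N -> pint p (k`!%:R^-1).
Proof.
move=> hp; elim: k => [|k IH] hk; first by rewrite fact0 invr1 pint1.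
rewrite factS natrM invfM; apply: pintM => //; last by apply: IH; apply: ltnW.
exact: pintVn.
Qed.

Lemma prod_expand p n (c : nat -> rat) (u : rat) : prime p -> pint p u ->
  (forall i, (i < n)%N -> c i != 0 /\ pint p (c i)^-1) ->
  exists R, pint p R /\
   \prod_(i < n) (c i + u) =
     (\prod_(i < n) c i) * (1 + u * \sum_(i < n) (c i)^-1 + u ^+ 2 * R).
Proof.
move=> hp hu; elim: n => [|n IH] hc.
  exists 0; split; first exact: (pint0 hp).
  by rewrite !big_ord0; ring.
have [R [hR e]] : exists R, pint p R /\
   \prod_(i < n) (c i + u) =
     (\prod_(i < n) c i) * (1 + u * \sum_(i < n) (c i)^-1 + u ^+ 2 * R).
  by apply: IH => i hi; apply: hc; apply: ltnW.
have [cn0 hd] := hc n (ltnSn n).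
have hS : pint p (\sum_(i < n) (c i)^-1).
  by apply: (pint_sum (F := fun i => (c i)^-1)) => // i hi; case: (hc i (leq_trans hi (leqnSn n))).
set S := \sum_(i < n) (c i)^-1 in e hS.
exists (R + S * (c n)^-1 + u * R * (c n)^-1); split.
  by apply: pintD => //; [apply: pintD => //; apply: pintM | apply: pintM => //; apply: pintM].
rewrite !big_ord_recr /= e -/S.
field; exact: cn0.
Qed.

Lemma harm_diff a d :
  harm (a + d) - harm a = \sum_(i < d) (((a + d - i)%N)%:R)^-1.
Proof.
elim: d => [|d IH]; first by rewrite addn0 big_ord0 subrr.
rewrite /harm addnS big_ord_recr /= -/(harm (a + d)) big_ord_recl /=.
rewrite subn0.
have -> : \sum_(i < d) (((a + d).+1 - bump 0 i)%N%:R)^-1 =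
          \sum_(i < d) ((a + d - i)%N%:R)^-1 :> rat.
  by apply: eq_bigr => i _; rewrite /bump /= add1n subSS.
rewrite -IH /harm; ring.
Qed.

Lemma split_prod3 (F : nat -> rat) m k : (m < k)%N ->
  \prod_(i < k) F i =
   (\prod_(i < m) F i) * F m * \prod_(j < k - m.+1) F (m.+1 + j)%N.
Proof.
move=> hmk; move: (k - m.+1)%N (subnKC hmk) => d <-.
by rewrite big_split_ord /= big_ord_recr /=.
Qed.

Lemma split_prod2 (F : nat -> rat) m k : (m <= k)%N ->
  \prod_(i < k) F i =
   (\prod_(i < m) F i) * \prod_(j < k - m) F (m + j)%N.
Proof.
move=> hmk; move: (k - m)%N (subnKC hmk) => d <-.
by rewrite big_split_ord /=.
Qed.

Lemma unit_nat p c : prime p -> (0 < c)%N -> (c < p)%N ->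
  (c%:R : rat) != 0 /\ pint p (c%:R^-1).
Proof.
move=> hp h0 h1; split; first by rewrite pnatr_eq0 -lt0n.
exact: pintVn.
Qed.

Lemma prod_ffact m k :
  \prod_(i < k) ((m - i)%N%:R : rat) = ('C(m, k) * k`!)%:R.
Proof. by rewrite bin_ffact ffact_prod natr_prod. Qed.

Lemma binqE (y : rat) k : binq y k = (\prod_(i < k) (y - i%:R)) / k`!%:R.
Proof. by []. Qed.

Lemma m2_lt p m : prime p -> (m <= (p - 1)./2)%N -> (m + m < p)%N.
Proof.
move=> hp hm; have := prime_gt1 hp; have := odd_double_half (p - 1).
rewrite -muln2; move: ((p - 1)./2) hm => h hm; case: (odd _) => /=; lia.
Qed.

Ltac psolve hp := repeat match goal with
  | |- is_true (pint _ (_ * _)) => apply: (pintM hp)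
  | |- is_true (pint _ (_ + _)) => apply: (pintD hp)
  | |- is_true (pint _ (- _)) => apply: (pintN hp)
  | |- is_true (pint _ (_ ^+ _)) => apply: (pintX _ hp)
  | |- is_true (pint _ (_ %:R)) => apply: (pint_nat _ hp)
  | |- is_true (pint _ (_ %:~R)) => apply: (pint_int _ hp)
  | |- is_true (pint _ 1) => apply: (pint1 hp)
  | |- is_true (pint _ _) => assumption
  end.

Lemma part1 p m k (t : int) (y : rat) : prime p -> (m <= (p - 1)./2)%N -> (k <= m)%N ->
  y = m%:R + p%:R * t%:~R ->
  pint p ((binq y k * binq (y + k%:R) k -
     ('C(m, k))%:R * ('C(m + k, k))%:R *
          (1 + p%:R * t%:~R * harm (m + k) - p%:R * t%:~R * harm (m - k)))
     / (p ^ 2)%:R).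
Proof.
move=> hp hm hk hy.
have p0 : (p%:R : rat) != 0 by rewrite pnatr_eq0; case: eqP hp => // ->.
have m2 := m2_lt hp hm.
set u : rat := p%:R * t%:~R.
have hu : pint p u by apply: pintM => //; [exact: pint_nat | exact: pint_int].
have e1 : \prod_(i < k) (y - i%:R) = \prod_(i < k) (((m - i)%N)%:R + u).
  apply: eq_bigr => i _; rewrite natrB; last by apply: leq_trans (ltnW (ltn_ord i)) hk.
  by rewrite hy /u; ring.
have e2 : \prod_(i < k) (y + k%:R - i%:R) = \prod_(i < k) (((m + k - i)%N)%:R + u).
  apply: eq_bigr => i _; rewrite natrB; last by rewrite ltnW // ltn_addl.
  by rewrite natrD hy /u; ring.
have [R1 [hR1 f1]] := @prod_expand p k (fun i => ((m - i)%N)%:R) u hp hu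
  (fun i hi => @unit_nat p (m - i)%N hp ltac:(lia) ltac:(lia)).
have [R2 [hR2 f2]] := @prod_expand p k (fun i => ((m + k - i)%N)%:R) u hp hu
  (fun i hi => @unit_nat p (m + k - i)%N hp ltac:(lia) ltac:(lia)).
have S1 := harm_diff (m - k) k; rewrite subnK // in S1.
have S2 := harm_diff m k.
rewrite !binqE e1 e2 f1 f2 -S1 -S2 !prod_ffact.
have kf : (k`!%:R : rat) != 0 by rewrite pnatr_eq0 -lt0n fact_gt0.
set a1 := harm m - harm (m - k); set a2 := harm (m + k) - harm m.
have ha1 : pint p a1 by rewrite /a1 S1; apply: (pint_sum (F := fun i => ((m - i)%N%:R)^-1)) => // i hi; case: (@unit_nat p (m - i)%N hp ltac:(lia) ltac:(lia)).
have ha2 : pint p a2 by rewrite /a2 S2; apply: (pint_sum (F := fun i => ((m + k - i)%N%:R)^-1)) => // i hi; case: (@unit_nat p (m + k - i)%N hp ltac:(lia) ltac:(lia)).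
have -> : harm (m + k) = a2 + harm m by rewrite /a2; ring.
have -> : harm (m - k) = harm m - a1 by rewrite /a1; ring.
set C1 := ('C(m, k))%:R; set C2 := ('C(m + k, k))%:R.
have hC1 : pint p C1 by exact: pint_nat.
have hC2 : pint p C2 by exact: pint_nat.
have ht : pint p t%:~R by exact: pint_int.
rewrite natrX !natrM -/C1 -/C2.
have -> : ((C1 * k`!%:R * (1 + u * a1 + u ^+ 2 * R1) / k`!%:R *
    (C2 * k`!%:R * (1 + u * a2 + u ^+ 2 * R2) / k`!%:R) -
    C1 * C2 * (1 + u * (a2 + harm m) - u * (harm m - a1))) / p%:R ^+ 2) =
  C1 * C2 * t%:~R ^+ 2 * (R1 + R2 + a1 * a2 + u * (a1 * R2 + a2 * R1) + u ^+ 2 * R1 * R2).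
  by rewrite /u; field; rewrite kf p0.
psolve hp.
Qed.

Lemma mul_exp p (u a b c e : rat) : prime p -> pint p u -> pint p a -> pint p b ->
  pint p c -> pint p e -> exists Z, pint p Z /\
  (1 + u * a + u ^+ 2 * b) * (1 + u * c + u ^+ 2 * e) = 1 + u * (a + c) + u ^+ 2 * Z.
Proof.
move=> hp hu ha hb hc he.
exists (b + e + a * c + u * (a * e + c * b) + u ^+ 2 * b * e); split; last by ring.
psolve hp.
Qed.

Lemma prodN_fact d : \prod_(j < d) (- (j.+1)%:R : rat) = (-1) ^+ d * d`!%:R.
Proof.
elim: d => [|d IH]; first by rewrite big_ord0 fact0 expr0 mulr1.
by rewrite big_ord_recr /= IH factS natrM exprS; ring.
Qed.

Lemma sumN_harm d : \sum_(j < d) (- (j.+1)%:R : rat)^-1 = - harm d.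
Proof. by rewrite /harm -sumrN; apply: eq_bigr => j _; rewrite invrN. Qed.

Lemma unit_neg p c : prime p -> (0 < c)%N -> (c < p)%N ->
  (- c%:R : rat) != 0 /\ pint p ((- c%:R)^-1).
Proof.
move=> hp h0 h1; have [a b] := unit_nat hp h0 h1; split; first by rewrite oppr_eq0.
by rewrite invrN; apply: pintN.
Qed.

Lemma harm0 : harm 0 = 0. Proof. by rewrite /harm big_ord0. Qed.

Lemma first_prod p m k (u y : rat) : prime p -> pint p u -> (m < k)%N -> (k < p)%N ->
  y = m%:R + u ->
  exists R, pint p R /\
  \prod_(i < k) (y - i%:R) = m`!%:R * ((-1) ^+ (k - m.+1) * (k - m.+1)`!%:R) * u *
      (1 + u * (harm m - harm (k - m.+1)) + u ^+ 2 * R).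
Proof.
move=> hp hu hmk hkp hy.
rewrite (split_prod3 (fun i : nat => y - i%:R) hmk) /=.
set d := (k - m.+1)%N.
have e1 : \prod_(i < m) (y - i%:R) = \prod_(i < m) (((m - i)%N)%:R + u).
  apply: eq_bigr => i _; rewrite natrB; last by apply: ltnW (ltn_ord i).
  by rewrite hy; ring.
have e3 : \prod_(j < d) (y - (m.+1 + j)%N%:R) = \prod_(j < d) (- (j.+1)%:R + u).
  by apply: eq_bigr => j _; rewrite hy natrD -addn1 natrD; ring.
have [R1 [hR1 f1]] := @prod_expand p m (fun i => ((m - i)%N)%:R) u hp hu
  (fun i hi => @unit_nat p (m - i)%N hp ltac:(lia) ltac:(lia)).
have [R3 [hR3 f3]] := @prod_expand p d (fun j => - (j.+1)%:R) u hp hu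
  (fun j hj => @unit_neg p j.+1 hp ltac:(lia) ltac:(lia)).
have S1 := harm_diff 0 m; rewrite add0n harm0 subr0 in S1.
rewrite e1 e3 f1 f3 sumN_harm prod_ffact prodN_fact -S1 binn mul1n.
have h1 : pint p (harm m).
  rewrite S1; apply: (pint_sum (F := fun i => ((m - i)%N%:R)^-1)) => // i hi.
  by case: (@unit_nat p (m - i)%N hp ltac:(lia) ltac:(lia)).
have h3 : pint p (harm d).
  apply: (pint_sum (F := fun i => (i.+1%:R)^-1)) => // i hi.
  by case: (@unit_nat p i.+1 hp ltac:(lia) ltac:(lia)).
have [Z [hZ eZ]] := mul_exp hp hu h1 hR1 (pintN hp h3) hR3.
exists Z; split => //.
rewrite -eZ hy; ring.
Qed.

Lemma second_prod_unit p m k (u y : rat) : prime p -> pint p u -> (m + k < p)%N ->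
  y = m%:R + u ->
  exists R, pint p R /\
  \prod_(i < k) (y + k%:R - i%:R) = ('C(m + k, k) * k`!)%:R *
      (1 + u * (harm (m + k) - harm m) + u ^+ 2 * R).
Proof.
move=> hp hu hmk hy.
have e2 : \prod_(i < k) (y + k%:R - i%:R) = \prod_(i < k) (((m + k - i)%N)%:R + u).
  apply: eq_bigr => i _; rewrite natrB; last by rewrite ltnW // ltn_addl.
  by rewrite natrD hy; ring.
have [R2 [hR2 f2]] := @prod_expand p k (fun i => ((m + k - i)%N)%:R) u hp hu
  (fun i hi => @unit_nat p (m + k - i)%N hp ltac:(lia) ltac:(lia)).
have S2 := harm_diff m k.
by exists R2; split => //; rewrite e2 f2 -S2 prod_ffact.
Qed.

Lemma harm_pint p n : prime p -> (n < p)%N -> pint p (harm n).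
Proof.
move=> hp hn; apply: (pint_sum (F := fun i => (i.+1%:R)^-1)) => // i hi.
by case: (@unit_nat p i.+1 hp ltac:(lia) ltac:(lia)).
Qed.

Lemma signE m k : (m < k)%N -> ((-1) ^+ (m + k + 1) : rat) = (-1) ^+ (k - m.+1).
Proof.
move=> h; have -> : (m + k + 1 = (k - m.+1) + (m.+1) * 2)%N by lia.
by rewrite exprD mulnC exprM sqrrN !expr1n mulr1.
Qed.

Lemma part3 p m k (t : int) (y : rat) : prime p -> (m < k)%N -> (m + k < p)%N ->
  y = m%:R + p%:R * t%:~R ->
  pint p ((binq y k * binq (y + k%:R) k -
     (-1) ^+ (m + k + 1) * p%:R * t%:~R * ('C(m + k, k))%:R /
          ((k%:R - m%:R) * ('C(k, m))%:R) *
          (1 + p%:R * t%:~R * harm (m + k) - p%:R * t%:~R * harm (k - m - 1)))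
     / (p ^ 3)%:R).
Proof.
move=> hp hmk hmkp hy.
have p0 : (p%:R : rat) != 0 by rewrite pnatr_eq0; case: eqP hp => // ->.
set u : rat := p%:R * t%:~R.
have hu : pint p u by apply: pintM => //; [exact: pint_nat | exact: pint_int].
have ht : pint p t%:~R by exact: pint_int.
have hkp : (k < p)%N by nlia.
have [R1 [hR1 f1]] := first_prod hp hu hmk hkp hy.
have [R2 [hR2 f2]] := @second_prod_unit p m k u y hp hu hmkp hy.
have -> : (k - m - 1 = k - m.+1)%N by nlia.
set d := (k - m.+1)%N in f1 *.
have hm : pint p (harm m) by apply: harm_pint => //; nlia.
have hd : pint p (harm d) by apply: harm_pint => //; nlia.
have hmk' : pint p (harm (m + k)) by apply: harm_pint => //; nlia.
have [Z [hZ eZ]] := mul_exp hp hu (pintB hp hm hd) hR1 (pintB hp hmk' hm) hR2.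
rewrite !binqE f1 f2 signE // -/d natrM.
have ekm : (k%:R - m%:R : rat) = d.+1%:R by rewrite -natrB ?(ltnW hmk) //; congr (_%:R); nlia.
rewrite ekm natrX.
have kfE : (k`!%:R : rat) = ('C(k, m))%:R * m`!%:R * d.+1%:R * d`!%:R.
  rewrite -!natrM -(bin_fact (ltnW hmk)); congr (_%:R).
  have -> : (k - m = d.+1)%N by nlia.
  by rewrite factS; ring.
have hkf : pint p (k`!%:R^-1) by exact: pintVfact.
set C2 := ('C(m + k, k))%:R.
have -> : ((m`!%:R * ((-1) ^+ d * d`!%:R) * u *
      (1 + u * (harm m - harm d) + u ^+ 2 * R1) / k`!%:R *
     (C2 * k`!%:R * (1 + u * (harm (m + k) - harm m) + u ^+ 2 * R2) / k`!%:R) -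
     (-1) ^+ d * p%:R * t%:~R * C2 / (d.+1%:R * ('C(k, m))%:R) *
     (1 + u * harm (m + k) - u * harm d)) / p%:R ^+ 3) =
   m`!%:R * ((-1) ^+ d * d`!%:R) * C2 * k`!%:R^-1 * t%:~R ^+ 3 * Z.
  have mf0 : (m`!%:R : rat) != 0 by rewrite pnatr_eq0 -lt0n fact_gt0.
  have df0 : (d`!%:R : rat) != 0 by rewrite pnatr_eq0 -lt0n fact_gt0.
  have d10 : (d.+1%:R : rat) != 0 by rewrite pnatr_eq0.
  have d10' : (1 + d%:R : rat) != 0 by rewrite addrC natr1 pnatr_eq0.
  have ck0 : (('C(k, m))%:R : rat) != 0 by rewrite pnatr_eq0 -lt0n bin_gt0 ltnW.
  rewrite kfE.
  set E1 := (1 + u * (harm m - harm d) + u ^+ 2 * R1) in eZ *.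
  set E2 := (1 + u * (harm (m + k) - harm m) + u ^+ 2 * R2) in eZ *.
  transitivity ((-1) ^+ d * C2 / (('C(k, m))%:R * d.+1%:R) * u *
      (E1 * E2 - (1 + u * harm (m + k) - u * harm d)) / p%:R ^+ 3).
    rewrite /u; field.
    by rewrite p0 mf0 df0 d10' ck0.
  rewrite eZ /u; field.
  by rewrite p0 mf0 df0 d10' ck0.
have hC2 : pint p C2 by exact: pint_nat.
psolve hp.
Qed.

Lemma wilson1 p : prime p ->
  exists w, pint p w /\ (((p - 1)`!)%:R : rat) = -1 + p%:R * w.
Proof.
move=> hp; have := Wilson (prime_gt1 hp); rewrite hp => /esym /dvdnP [q hq].
exists q%:R; split; first exact: pint_nat.
have : (((p.-1)`!).+1%:R : rat) = (q * p)%:R by rewrite hq.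
rewrite -addn1 natrD natrM subn1 => h.
have -> : ((p.-1)`!%:R : rat) = (q%:R * p%:R) - 1 by rewrite -h; ring.
ring.
Qed.

Lemma wilson2 p k : prime p -> (0 < k)%N -> (k < p)%N ->
  exists w, pint p w /\ (((p - k)`! * (k - 1)`!)%:R : rat) = (-1) ^+ k + p%:R * w.
Proof.
move=> hp; elim: k => [//|k IH] _ hk.
case: k IH hk => [|k] IH hk.
  have [w [hw e]] := wilson1 hp; exists w; split => //.
  by rewrite fact0 muln1 e expr1.
have [w [hw e]] := IH isT (ltnW hk).
set X := (((p - k.+2)`! * (k.+2 - 1)`!)%:R : rat).
have hX : pint p X by exact: pint_nat.
have [k0 hk'] := @unit_nat p k.+1 hp isT (ltnW hk).
exists ((X - k.+1%:R * w) / k.+1%:R); split.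
  by apply: pintM => //; apply: pintB => //; apply: pintM => //; exact: pint_nat.
have eX : ((p - k.+1)%:R : rat) * X = k.+1%:R * ((-1) ^+ k.+1 + p%:R * w).
  rewrite -e /X -!natrM; congr (_%:R).
  have -> : (p - k.+1 = (p - k.+2).+1)%N by nlia.
  rewrite !subn1 /= !factS; nia.
rewrite natrB in eX; last by nlia.
have : X = (-1) ^+ k.+2 + p%:R * ((X - k.+1%:R * w) / k.+1%:R).
  apply: (mulfI k0).
  move: eX; set s := (-1) ^+ k.+1 => eX.
  rewrite mulrDr (_ : k.+1%:R * (p%:R * ((X - k.+1%:R * w) / k.+1%:R)) = p%:R * (X - k.+1%:R * w)); last by rewrite mulrCA [k.+1%:R * (_ / _)]mulrC divfK.
  have -> : k.+1%:R * X = p%:R * X - k.+1%:R * (s + p%:R * w) by rewrite -eX; ring.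
  rewrite exprS -/s; ring.
by [].
Qed.

Lemma eq_pint p (a b : rat) : a = b -> pint p b -> pint p a.
Proof. by move=> ->. Qed.

Lemma QQ p m k : prime p -> (m + m < p)%N -> (p - m <= k)%N -> (k <= p - 1)%N ->
  pint p ((((-1) ^+ (k - m.+1) * (k - m.+1)`!%:R * (m + k - p)`!%:R * (p - 1)`!%:R
              / (k`!%:R ^+ 2))
           - (-1) ^+ m / (k%:R * (k%:R - m%:R) * ('C(m, p - k))%:R * ('C(k, m))%:R))
          / p%:R).
Proof.
move=> hp hm hk1 hk2.
have p1 := prime_gt1 hp.
have p0 : (p%:R : rat) != 0 by rewrite pnatr_eq0; nlia.
have hmk : (m < k)%N by nlia.
set d := (k - m.+1)%N; set i0 := (m + k - p)%N.
have [w1 [hw1 e1]] := wilson1 hp.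
have [w2 [hw2 e2]] := @wilson2 p k hp ltac:(nlia) ltac:(nlia).
rewrite natrM in e2.
have ekm : (k%:R - m%:R : rat) = d.+1%:R by rewrite -natrB ?(ltnW hmk) //; congr (_%:R); nlia.
rewrite ekm e1.
have kfE : (k`!%:R : rat) = k%:R * (k - 1)`!%:R.
  by rewrite -natrM; congr (_%:R); case: (k) hmk => // k' _; rewrite factS subn1.
set kk := (k%:R : rat) in kfE *; set k1f := ((k - 1)`!%:R : rat) in e2 kfE *.
set pk := ((p - k)`!%:R : rat) in e2 *.
set Ckm := (('C(k, m))%:R : rat); set Cmpk := (('C(m, p - k))%:R : rat).
have hrel : kk * k1f = Ckm * Cmpk * pk * i0`!%:R * d.+1%:R * d`!%:R.
  rewrite -kfE /Ckm /Cmpk /pk -!natrM; congr (_%:R).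
  rewrite -(bin_fact (ltnW hmk)) -(bin_fact (_ : p - k <= m)%N); last by nlia.
  have -> : (k - m = d.+1)%N by nlia.
  have -> : (m - (p - k) = i0)%N by rewrite /i0; nlia.
  rewrite factS; ring.
have kk0 : kk != 0 by rewrite pnatr_eq0; nlia.
have k1f0 : k1f != 0 by rewrite pnatr_eq0 -lt0n fact_gt0.
have ck0 : Ckm != 0 by rewrite pnatr_eq0 -lt0n bin_gt0 ltnW.
have cp0 : Cmpk != 0 by rewrite pnatr_eq0 -lt0n bin_gt0; nlia.
have pk0 : pk != 0 by rewrite pnatr_eq0 -lt0n fact_gt0.
have i00 : (i0`!%:R : rat) != 0 by rewrite pnatr_eq0 -lt0n fact_gt0.
have df0 : (d`!%:R : rat) != 0 by rewrite pnatr_eq0 -lt0n fact_gt0.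
have d10 : (d.+1%:R : rat) != 0 by rewrite pnatr_eq0.
have sgn : ((-1) ^+ m * (-1) ^+ k : rat) = - (-1) ^+ d.
  have ek : k = m + d.+1 by rewrite /d; nlia.
  rewrite ek exprD mulrA -exprD -signr_odd oddD addbb expr0 mul1r exprS mulN1r //.
have sdE : ((-1) ^+ d : rat) = - ((-1) ^+ m * (-1) ^+ k) by rewrite sgn opprK.
have w2E : w2 = (pk * k1f - (-1) ^+ k) / p%:R by rewrite e2; field.
have kkE : kk = Ckm * Cmpk * pk * i0`!%:R * d.+1%:R * d`!%:R / k1f by rewrite -hrel; field.
apply: (@eq_pint p _ (d`!%:R * i0`!%:R * (k`!%:R^-1) ^+ 2 * ((-1) ^+ d * w1 - (-1) ^+ m * w2))).
  rewrite kfE w2E kkE sdE; field.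
  rewrite p0 [1 + _]addrC natr1 !pnatr_eq0 -!lt0n !fact_gt0 !bin_gt0 /=.
  apply/andP; split; nlia.
have hs : forall n, pint p ((-1) ^+ n) by move=> n; apply: pintX => //; exact: (@pint_int p (-1) hp).
apply: (pintM hp); [apply: (pintM hp); [apply: (pintM hp); [exact: pint_nat | exact: pint_nat] | apply: pintX => //; apply: pintVfact => //; nlia] |].
by apply: (pintB hp); apply: (pintM hp).
Qed.



Lemma final2 p (Q Q' t A B C X : rat) : prime p ->
  X = Q * p%:R ^+ 2 * t * (t + 1) * ((1 + p%:R * A) * (1 + p%:R * B) * (1 + p%:R * C)) ->
  pint p ((Q - Q') / p%:R) -> pint p Q -> pint p t -> pint p A -> pint p B -> pint p C ->
  pint p ((X - Q' * p%:R ^+ 2 * t * (t + 1)) / p%:R ^+ 3).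
Proof.
move=> hp -> hQQ hQ ht hA hB hC.
have p0 : (p%:R : rat) != 0 by rewrite pnatr_eq0; case: eqP hp => // ->.
set D := (Q - Q') / p%:R in hQQ.
apply: (@eq_pint p _ (t * (t + 1) * (D + Q * (A + B + C + p%:R * (A * B + A * C + B * C) + p%:R ^+ 2 * (A * B * C))))).
  by rewrite /D; field.
psolve hp.
Qed.

Lemma part2 p m k (t : int) (y : rat) : prime p -> (m + m < p)%N ->
  (p - m <= k)%N -> (k <= p - 1)%N ->
  y = m%:R + p%:R * t%:~R ->
  pint p ((binq y k * binq (y + k%:R) k -
     (-1) ^+ m * (p%:R) ^+ 2 * t%:~R * (t%:~R + 1) /
          (k%:R * (k%:R - m%:R) * ('C(m, p - k))%:R * ('C(k, m))%:R))
     / (p ^ 3)%:R).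
Proof.
move=> hp hm hk1 hk2 hy.
have p1 := prime_gt1 hp.
have hmk : (m < k)%N by lia.
have hkp : (k < p)%N by lia.
have hi0 : (m + k - p < k)%N by lia.
have hpmk : (p <= m + k)%N by lia.
have p0 : (p%:R : rat) != 0 by rewrite pnatr_eq0; lia.
set u : rat := p%:R * t%:~R.
have ht : pint p t%:~R by exact: pint_int.
have hu : pint p u by rewrite /u; psolve hp.
have hu' : pint p (p%:R + u) by psolve hp.
have [R1 [hR1 f1]] := first_prod hp hu hmk hkp hy.
set d := (k - m.+1)%N in f1.
set i0 := (m + k - p)%N in hi0.
have ei0 : (i0%:R : rat) = m%:R + k%:R - p%:R by rewrite natrB // natrD.
set e := (k - i0.+1)%N.
have ee : (e = p - m - 1)%N by rewrite /e /i0; lia.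
have ea : \prod_(i < i0) (y + k%:R - i%:R) = \prod_(i < i0) (((i0 - i)%N)%:R + (p%:R + u)).
  apply: eq_bigr => i _; rewrite natrB; last by apply: ltnW.
  by rewrite ei0 hy /u; ring.
have eb : y + k%:R - i0%:R = p%:R + u by rewrite ei0 hy /u; ring.
have ec : \prod_(j < e) (y + k%:R - (i0.+1 + j)%N%:R) = \prod_(j < e) (((p - 1 - j)%N)%:R + u).
  apply: eq_bigr => j _.
  have hj : (j < p - m - 1)%N by rewrite -ee.
  have -> : ((p - 1 - j)%N%:R : rat) = p%:R - 1 - j%:R.
    rewrite -subnDA natrB; last by lia.
    by rewrite natrD; ring.
  by rewrite natrD -addn1 natrD ei0 hy /u; ring.
have [Ra [hRa fa]] := @prod_expand p i0 (fun i => ((i0 - i)%N)%:R) (p%:R + u) hp hu'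
  (fun i hi => @unit_nat p (i0 - i)%N hp ltac:(lia) ltac:(lia)).
have [Rc [hRc fc]] := @prod_expand p e (fun j => ((p - 1 - j)%N)%:R) u hp hu
  (fun j hj => @unit_nat p (p - 1 - j)%N hp ltac:(lia) ltac:(lia)).
rewrite !binqE f1 (split_prod3 (fun i : nat => y + k%:R - i%:R) hi0) /= -/e ea eb ec fa fc.
have eF : (((p - 1)`!)%:R : rat) = ((p - 1) ^_ e)%:R * m`!%:R.
  rewrite -natrM -(ffact_fact (_ : e <= p - 1)%N); last by rewrite ee; lia.
  by have -> : (p - 1 - e = m)%N by rewrite ee; lia.
rewrite prod_ffact binn mul1n -natr_prod -ffact_prod.
set Sa := \sum_(i < i0) ((i0 - i)%N%:R)^-1.
set Sc := \sum_(i < e) ((p - 1 - i)%N%:R)^-1.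
have hSa : pint p Sa.
  apply: (pint_sum (F := fun i => ((i0 - i)%N%:R)^-1)) => // i hi.
  by case: (@unit_nat p (i0 - i)%N hp ltac:(lia) ltac:(lia)).
have hSc : pint p Sc.
  apply: (pint_sum (F := fun i => ((p - 1 - i)%N%:R)^-1)) => // i hi.
  by case: (@unit_nat p (p - 1 - i)%N hp ltac:(lia) ltac:(lia)).
have hhm : pint p (harm m) by apply: harm_pint => //; lia.
have hhd : pint p (harm d) by apply: harm_pint => //; rewrite /d; lia.
have kf0 : (k`!%:R : rat) != 0 by rewrite pnatr_eq0 -lt0n fact_gt0.
set D := (k%:R * (k%:R - m%:R) * ('C(m, p - k))%:R * ('C(k, m))%:R).
rewrite natrX.
rewrite (_ : (-1) ^+ m * p%:R ^+ 2 * t%:~R * (t%:~R + 1) / D =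
   ((-1) ^+ m / D) * p%:R ^+ 2 * t%:~R * (t%:~R + 1)); last by ring.
apply: (@final2 p ((-1) ^+ d * d`!%:R * i0`!%:R * (p - 1)`!%:R / (k`!%:R ^+ 2))
   _ _ (t%:~R * (harm m - harm d) + p%:R * t%:~R ^+ 2 * R1)
   ((1 + t%:~R) * Sa + p%:R * (1 + t%:~R) ^+ 2 * Ra)
   (t%:~R * Sc + p%:R * t%:~R ^+ 2 * Rc)) => //.
- rewrite eF /u; field; exact: kf0.
- exact: (QQ hp hm hk1 hk2).
- have : pint p (k`!%:R^-1) by exact: pintVfact.
  move=> hkf; rewrite -[_ / _ ^+ 2]mulrA -exprVn; psolve hp.
- psolve hp.
- psolve hp.
- psolve hp.
Qed.



Lemma pa_mod p (x : padic_int p) (m : nat) : prime p -> (pa x 1 = m%:Z %[mod p%:Z])%Z ->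
  forall n, (0 < n)%N -> exists tt : int, pa x n = m%:Z + p%:Z * tt.
Proof.
move=> hp h1.
have H : forall n, (0 < n)%N -> (p%:Z %| pa x n - m%:Z)%Z.
  elim=> [//|n IH] _.
  case: n IH => [|n] IH; first by rewrite -eqz_mod_dvd; apply/eqP.
  have := pa_coh x n.+1; move/eqP; rewrite eqz_mod_dvd => hd.
  have hd' : (p%:Z %| pa x n.+2 - pa x n.+1)%Z.
    apply: dvdz_trans hd; rewrite dvdzE /=; apply: dvdn_exp => //.
  have -> : pa x n.+2 - m%:Z = (pa x n.+2 - pa x n.+1) + (pa x n.+1 - m%:Z) by ring.
  by apply: rpredD => //; apply: IH.
move=> n hn; have /dvdzP [q hq] := H n hn.
by exists q; rewrite -[pa x n](subrK m%:Z) hq; ring.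
Qed.


Unset Implicit Arguments.

Theorem lemma2p1 (p : nat) (x : padic_int p) (m : nat) :
  prime p -> odd p ->
  (m < p)%N -> (pa x 1 = m%:Z %[mod p%:Z])%Z ->
  (m <= (p - 1)./2)%N ->
  let t := fun y : rat => (y - m%:R) / p%:R in
  let L := fun (k : nat) (y : rat) => binq y k * binq (y + k%:R) k in
  (forall k : nat, (k <= m)%N ->
     padic_cong x 2 (L k)
       (fun y => ('C(m, k))%:R * ('C(m + k, k))%:R *
          (1 + p%:R * t y * harm (m + k) - p%:R * t y * harm (m - k))))
  /\
  (forall k : nat, (p - m <= k)%N -> (k <= p - 1)%N ->
     padic_cong x 3 (L k)
       (fun y => (-1) ^+ m * (p%:R) ^+ 2 * t y * (t y + 1) /
          (k%:R * (k%:R - m%:R) * ('C(m, p - k))%:R * ('C(k, m))%:R)))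
  /\
  ((m < (p - 1)./2)%N ->
   forall k : nat, (m + 1 <= k)%N -> (k <= p - 1 - m)%N ->
     padic_cong x 3 (L k)
       (fun y => (-1) ^+ (m + k + 1) * p%:R * t y * ('C(m + k, k))%:R /
          ((k%:R - m%:R) * ('C(k, m))%:R) *
          (1 + p%:R * t y * harm (m + k) - p%:R * t y * harm (k - m - 1)))).
Proof.
move=> hp hodd hmp hx1 hm t L.
have p0 : (p%:R : rat) != 0 by rewrite pnatr_eq0; case: eqP hp => // ->.
have m2 := m2_lt hp hm.
have key : forall n, (0 < n)%N -> exists tt : int,
    (pa x n)%:~R = m%:R + p%:R * tt%:~R :> rat /\ t (pa x n)%:~R = tt%:~R.
  move=> n hn; have [tt e] := pa_mod hp hx1 hn.
  have hy : (pa x n)%:~R = m%:R + p%:R * tt%:~R :> rat.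
    by rewrite e rmorphD rmorphM /=.
  exists tt; split => //; rewrite /t hy; field; exact: p0.
split; [|split].
- move=> k hk; exists 1%N; move=> n hn; have [tt [hy ht]] := key n hn.
  rewrite /L ht; exact: part1 hp hm hk hy.
- move=> k hk1 hk2; exists 1%N; move=> n hn; have [tt [hy ht]] := key n hn.
  rewrite /L ht; exact: part2 hp m2 hk1 hk2 hy.
- move=> hm' k hk1 hk2; exists 1%N; move=> n hn; have [tt [hy ht]] := key n hn.
  have hmk : (m < k)%N by rewrite addn1 in hk1.
  have hmkp : (m + k < p)%N by move: (prime_gt1 hp) hk2 hmk; clear; lia.
  rewrite /L ht; exact: part3 hp hmk hmkp hy.
Qed.
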